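(* Let $n\ge1$ and $\vec v,\vec w\in\hat N^n$. Then $\vec v<\vec w$ if and only if $\vec w^\dagger<\vec v^\dagger$ (componentwise order). Consequently, if $\mu$ denotes the Möbius function of the poset $(\hat N^n,\le)$, then $\mu(\vec v,\vec w)=\mu(\vec w^\dagger,\vec v^\dagger)$ for all $\vec v,\vec w\in\hat N^n$.
   Context: $\hat N^0=\{()\}$ (empty vector) and for $n\ge1$, $\hat N^n$ is the set of names of planar rooted binary trees with $n$ internal vertices; every element of $\hat N^n$, $n\ge1$, is uniquely $\vec v_l\vee\vec v_r:=(\vec v_l,1,p+1+\vec v_r)$ with $\vec v_l\in\hat N^p,\vec v_r\in\hat N^q$, $p+q+1=n$, where $k+(w_1,\dots,w_q)=(w_1+k,\dots,w_q+k)$. The dendriform involution $\dagger$ is defined by $()^\dagger=()$ and $(\vec v\vee\vec w)^\dagger=\vec w^\dagger\vee\vec v^\dagger$. Componentwise order: $\vec v\le\vec w$ iff $v_i\le w_i$ for all $i$; $<$ means $\le$ and $\neq$. *)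

(* Defs.v *)
From mathcomp Require Import all_boot all_order all_algebra.
Set Implicit Arguments. Unset Strict Implicit. Unset Printing Implicit Defensive.
Import GRing.Theory Num.Theory.

Inductive bt : Type := Leaf | Node of bt & bt.

Fixpoint isize (t : bt) : nat :=
  match t with Leaf => 0 | Node l r => (isize l + isize r).+1 end.

Fixpoint name (t : bt) : seq nat :=
  match t with
  | Leaf => [::]
  | Node l r => name l ++ 1 :: map (addn (isize l).+1) (name r)
  end.

(* The dendriform involution on trees: (v \/ w)^dagger = w^dagger \/ v^dagger.
   On names: dagger (name t) = name (mirror t). *)
Fixpoint mirror (t : bt) : bt :=
  match t with Leaf => Leaf | Node l r => Node (mirror r) (mirror l) end.

Fixpoint trees_f (fuel n : nat) : seq bt :=
  match fuel with
  | 0 => [:: Leaf]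
  | f.+1 =>
    match n with
    | 0 => [:: Leaf]
    | m.+1 => flatten [seq [seq Node l r | l <- trees_f f p, r <- trees_f f (m - p)]
                       | p <- iota 0 m.+1]
    end
  end.
Definition trees (n : nat) : seq bt := trees_f n n.

Definition hatN (n : nat) : seq (seq nat) := [seq name t | t <- trees n].

Definition vle (v w : seq nat) : bool := all2 leq v w.
Definition vlt (v w : seq nat) : bool := vle v w && (v != w).

Local Open Scope ring_scope.
Fixpoint mobius_f {T : eqType} (S : seq T) (le : rel T) (k : nat) (x y : T) : int :=
  if x == y then 1 else
  match k with
  | 0 => 0
  | k'.+1 =>
    if le x y then
      - \sum_(z <- S | le x z && (z != y) && le z y) mobius_f S le k' x z
    else 0
  end.
Definition mobius {T : eqType} (S : seq T) (le : rel T) (x y : T) : int :=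
  mobius_f S le (size S) x y.
Local Close Scope ring_scope.

(* Main.v *)
From HB Require Import structures.
Require Import Defs.
From mathcomp Require Import all_boot all_order all_algebra.
From mathcomp Require Import zify.
Set Implicit Arguments. Unset Strict Implicit. Unset Printing Implicit Defensive.

Fixpoint bt_eqb (a b : bt) : bool := match a, b with
  | Leaf, Leaf => true
  | Node a1 a2, Node b1 b2 => bt_eqb a1 b1 && bt_eqb a2 b2
  | _, _ => false end.
Lemma bt_eqP : Equality.axiom bt_eqb.
Proof.
move=> a b; apply: (iffP idP) => [|<-].
  by elim: a b => [|a1 IH1 a2 IH2] [|b1 b2] //= /andP[/IH1 -> /IH2 ->].
by elim: a => //= a1 -> a2 ->.
Qed.
HB.instance Definition _ := hasDecEq.Build bt bt_eqP.
Lemma eqNode a b c d : (Node a b == Node c d) = (a == c) && (b == d).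
Proof. by []. Qed.

Fixpoint lo (t : bt) (i : nat) : nat := match t with Leaf => 0
  | Node l r => if i < isize l then lo l i else if i == isize l then 0
                else (isize l).+1 + lo r (i - (isize l).+1) end.
Fixpoint hi (t : bt) (i : nat) : nat := match t with Leaf => 0
  | Node l r => if i < isize l then hi l i else if i == isize l then (isize l + isize r).+1
                else (isize l).+1 + hi r (i - (isize l).+1) end.

Lemma size_name t : size (name t) = isize t.
Proof. by elim: t => //= l IHl r IHr; rewrite size_cat /= size_map IHl IHr addnS. Qed.

Lemma isize_mirror t : isize (mirror t) = isize t.
Proof. by elim: t => //= l -> r ->; rewrite addnC. Qed.
Lemma mirrorK t : mirror (mirror t) = t.
Proof. by elim: t => //= l -> r ->. Qed.
Lemma mirror_inj : injective mirror.
Proof. exact: can_inj mirrorK. Qed.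

Lemma nth_name t i : i < isize t -> nth 0 (name t) i = (lo t i).+1.
Proof.
elim: t i => //= l IHl r IHr i Hi.
rewrite nth_cat size_name.
case: (ltngtP i (isize l)) => H.
- by rewrite IHl.
- have -> : i - isize l = (i - (isize l).+1).+1 by lia.
  rewrite /= (nth_map 0) ?size_name; last by lia.
  rewrite IHr; [by rewrite addnS | lia].
- by subst; rewrite subnn.
Qed.

Lemma hi_bounds t i : i < isize t -> i < hi t i <= isize t.
Proof.
elim: t i => //= l IHl r IHr i Hi.
case: (ltngtP i (isize l)) => H.
- move: (IHl i H); lia.
- have := IHr (i - (isize l).+1); lia.
- lia.
Qed.

Lemma hi_a t i k : i < isize t -> i < k -> k < hi t i -> i < lo t k.
Proof.
elim: t i k => //= l IHl r IHr i k Hi Hik.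
case: (ltngtP i (isize l)) => H.
- move=> Hk; have := hi_bounds H => Hb.
  have Hkl : k < isize l by lia.
  by rewrite Hkl; apply: IHl.
- move=> Hk. have Hkl : isize l < k by lia.
  have -> : (k < isize l) = false by lia.
  have -> : (k == isize l) = false by lia.
  have := IHr (i - (isize l).+1) (k - (isize l).+1); lia.
- subst => Hk; have -> : (k < isize l) = false by lia.
  have -> : (k == isize l) = false by lia. lia.
Qed.

Lemma hi_b t i : i < isize t -> hi t i < isize t -> lo t (hi t i) <= i.
Proof.
elim: t i => //= l IHl r IHr i Hi.
case: (ltngtP i (isize l)) => H.
- move=> _; have := hi_bounds H => Hb.
  case: (ltngtP (hi l i) (isize l)) => H2; first by apply: IHl.
  + lia.
  + by [].
- move=> Hh.
  set j := i - (isize l).+1 in Hh *.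
  have Hj : j < isize r by lia.
  have := hi_bounds Hj => Hb.
  have Hh2 : hi r j < isize r by lia.
  have E : isize l < (isize l).+1 + hi r j by lia.
  have -> : ((isize l).+1 + hi r j < isize l) = false by lia.
  have -> : ((isize l).+1 + hi r j == isize l) = false by lia.
  have -> : (isize l).+1 + hi r j - (isize l).+1 = hi r j by lia.
  have := IHr j Hj Hh2; lia.
- lia.
Qed.

Lemma lo_mirror t j : j < isize t -> lo (mirror t) j = isize t - hi t (isize t - 1 - j).
Proof.
elim: t j => //= l IHl r IHr j Hj.
rewrite isize_mirror.
case: (ltngtP j (isize r)) => H.
- rewrite IHr //.
  have E : ~~ ((isize l + isize r).+1 - 1 - j < isize l) by lia.
  have E2 : ((isize l + isize r).+1 - 1 - j == isize l) = false by lia.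
  rewrite (negbTE E) E2.
  have -> : (isize l + isize r).+1 - 1 - j - (isize l).+1 = isize r - 1 - j by lia.
  have := hi_bounds (_ : isize r - 1 - j < isize r); lia.
- set j' := j - (isize r).+1.
  have Hj' : j' < isize l by lia.
  rewrite IHl ?isize_mirror //.
  have -> : (isize l + isize r).+1 - 1 - j = isize l - 1 - j' by lia.
  have E : isize l - 1 - j' < isize l by lia.
  rewrite E.
  have := hi_bounds E; lia.
- subst. have -> : (isize l + isize r).+1 - 1 - isize r = isize l by lia.
  by rewrite ltnn eqxx subnn.
Qed.

Lemma vleP s1 s2 : reflect (size s1 = size s2 /\ forall i, i < size s1 -> nth 0 s1 i <= nth 0 s2 i) (vle s1 s2).
Proof.
rewrite /vle; apply: (iffP idP).
  elim: s1 s2 => [|x s1 IH] [|y s2] //= /andP[Hxy /IH [Hs H]]; split; first by rewrite Hs.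
  by case=> [|i] //= Hi; apply: H.
elim: s1 s2 => [|x s1 IH] [|y s2] //= [Hs H]; case: Hs => // Hs. apply/andP; split; first exact: (H 0).
by apply: IH; split=> // i Hi; apply: (H i.+1).
Qed.

Lemma dir a b : vle (name a) (name b) -> vle (name (mirror b)) (name (mirror a)).
Proof.
move/vleP; rewrite !size_name => [[Hs H]].
have Hlo : forall i, i < isize a -> lo a i <= lo b i.
  by move=> i Hi; have := H i Hi; rewrite !nth_name // -?Hs.
have Hhi : forall i, i < isize a -> hi a i <= hi b i.
  move=> i Hi; have [Hb1 Hb2] := andP (hi_bounds Hi).
  have Hi' : i < isize b by rewrite -Hs.
  have [Hc1 Hc2] := andP (hi_bounds Hi').
  case: (ltnP (hi b i) (isize b)) => Hk; last by lia.
  have Hl := hi_b Hi' Hk.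
  have Hl2 := Hlo (hi b i) (_ : hi b i < isize a).
  rewrite leqNgt; apply/negP => C.
  have := hi_a Hi Hc1 C; lia.
apply/vleP; rewrite !size_name !isize_mirror; split; first by [].
move=> j Hj; rewrite !nth_name ?isize_mirror //; try lia.
rewrite !lo_mirror //; try lia.
have := Hhi (isize a - 1 - j) (_ : _ < isize a); rewrite -Hs; lia.
Qed.

Lemma key a b : vle (name (mirror a)) (name (mirror b)) = vle (name b) (name a).
Proof.
apply/idP/idP; last exact: dir.
by move/dir; rewrite !mirrorK.
Qed.

Lemma name_inj : injective name.
Proof.
elim=> [|l IHl r IHr] [|l' r'] //=; first by case: (name l').
  by case: (name l).
move=> E.
have Es : isize l = isize l'.
  have Sz : size (name (Node l r)) = size (name (Node l' r')) by rewrite /= E.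
  rewrite !size_name in Sz.
  case: (ltngtP (isize l) (isize l')) => // C.
  - have H1 : isize l' < isize (Node l r) by rewrite Sz /=; lia.
    have := nth_name H1; rewrite [name _]/= E nth_cat size_name ltnn subnn /=.
    have -> : (isize l' < isize l) = false by lia.
    have -> : (isize l' == isize l) = false by lia.
    lia.
  - have H1 : isize l < isize (Node l' r') by rewrite -Sz /=; lia.
    have := nth_name H1; rewrite [name _]/= -E nth_cat size_name ltnn subnn /=.
    have -> : (isize l < isize l') = false by lia.
    have -> : (isize l == isize l') = false by lia.
    lia.
move: E; move/eqP; rewrite eqseq_cat ?size_name // => /andP[/eqP/IHl -> /eqP[]].
by move=> /(inj_map (@addnI _))/IHr ->.
Qed.

Lemma count_allpairs_node (a : bt) A B :
  count (pred1 a) [seq Node l r | l <- A, r <- B] =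
  match a with Leaf => 0 | Node al ar => count (pred1 al) A * count (pred1 ar) B end.
Proof.
elim: A => [|x A IH]; first by case: a.
rewrite allpairs_cons count_cat IH count_map.
case: a IH => [|al ar] IH.
  by rewrite (eq_count (a2 := pred0)) ?count_pred0.
rewrite /= mulnDl; congr (_ + _).
rewrite (eq_count (a2 := fun y => (x == al) && (y == ar))); last by move=> y /=; rewrite eqNode.
by case: (x == al); rewrite ?mul1n ?mul0n ?count_pred0 //; apply: eq_count.
Qed.

Lemma count_trees f m a : m <= f -> count (pred1 a) (trees_f f m) = (isize a == m).
Proof.
elim: f m a => [|f IH] [|m] a Hm; try by rewrite /=; case: a.
change (trees_f f.+1 m.+1) with (flatten [seq [seq Node l r | l <- trees_f f p, r <- trees_f f (m - p)] | p <- iota 0 m.+1]).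
rewrite count_flatten -map_comp.
case: a => [|al ar].
  rewrite (@eq_map _ _ _ (fun _ => 0)); last by move=> p /=; rewrite count_allpairs_node.
  by elim: (iota 0 m.+1).
rewrite (_ : map _ _ = map (fun p => nat_of_bool ((p == isize al) && (isize al + isize ar == m))) (iota 0 m.+1)); first last.
  apply/eq_in_map.
  move=> p; rewrite mem_iota => Hp /=.
  rewrite count_allpairs_node !IH; try lia.
  rewrite sumn_count.
  case E: (isize al + isize ar == m).
    rewrite (eq_count (a2 := pred1 (isize al))); last by move=> p /=; rewrite andbT.
    rewrite count_uniq_mem ?iota_uniq // mem_iota /=; apply/eqP. move/eqP: E; lia.
  rewrite (eq_count (a2 := pred0)) ?count_pred0 /=; first by rewrite eqSS E.
  by move=> p /=; rewrite andbF.
Qed.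

Lemma mem_trees n a : (a \in trees n) = (isize a == n).
Proof. by rewrite -has_pred1 has_count count_trees //; case: (isize a == n). Qed.

Lemma uniq_trees n : uniq (trees n).
Proof.
apply: count_mem_uniq => a; rewrite mem_trees count_trees //.
Qed.
Module MobTheory.
Import GRing.Theory Num.Theory.
Local Open Scope ring_scope.

Lemma mobius_fE (T : eqType) (S : seq T) le k x y : mobius_f S le k x y =
  if x == y then 1 else match k with 0 => 0 | k'.+1 =>
   if le x y then - \sum_(z <- S | le x z && (z != y) && le z y) mobius_f S le k' x z else 0 end.
Proof. by case: k. Qed.

Section Mob.
Variable T : eqType.

Lemma mob_perm (S1 S2 : seq T) le k x y : perm_eq S1 S2 ->
  mobius_f S1 le k x y = mobius_f S2 le k x y.
Proof.
move=> HP; elim: k y => [|k IH] y; rewrite !mobius_fE //.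
case: (x == y) => //; case: (le x y) => //.
by rewrite (perm_big _ HP); congr (- _); apply: eq_bigr => z _; apply: IH.
Qed.

Lemma mob_ext (S : seq T) (le1 le2 : rel T) k x y : le1 =2 le2 ->
  mobius_f S le1 k x y = mobius_f S le2 k x y.
Proof.
move=> He; elim: k y => [|k IH] y; rewrite !mobius_fE //.
case: (x == y) => //; rewrite He; case: (le2 x y) => //.
congr (- _); rewrite (eq_bigl (fun z => le2 x z && (z != y) && le2 z y)); last by move=> z; rewrite !He.
by apply: eq_bigr => z _; apply: IH.
Qed.

Lemma mob_map (U : eqType) (f : U -> T) (injf : injective f) (S : seq U) le k x y :
  mobius_f (map f S) le k (f x) (f y) = mobius_f S (fun a b => le (f a) (f b)) k x y.
Proof.
elim: k y => [|k IH] y; rewrite mobius_fE [RHS]mobius_fE (inj_eq injf) //.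
case: (x == y) => //; case: (le (f x) (f y)) => //.
rewrite big_map; congr (- _).
rewrite (eq_bigl (fun z => le (f x) (f z) && (z != y) && le (f z) (f y))); last by move=> z; rewrite (inj_eq injf).
by apply: eq_bigr => z _; apply: IH.
Qed.

Lemma sum_delta (S : seq T) y (F : T -> int) : uniq S -> y \in S ->
  \sum_(z <- S) (if z == y then F z else 0) = F y.
Proof.
move=> Hu Hy; rewrite (bigD1_seq y) //= eqxx big1 ?addr0 // => z /negbTE ->; done.
Qed.

Lemma count_lt (P1 P2 : pred T) (s : seq T) z : subpred P1 P2 -> z \in s -> P2 z -> ~~ P1 z ->
  (count P1 s < count P2 s)%N.
Proof.
move=> Hs; elim: s => //= a s IH; rewrite inE => /orP[/eqP <-|Hz] H2 H1.
  by rewrite H2 (negbTE H1) add0n add1n ltnS sub_count.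
apply: leq_trans (_ : (P1 a + count P2 s <= _)%N).
  by rewrite -addnS leq_add2l IH.
by rewrite leq_add2r; case E: (P1 a) => //; rewrite (Hs _ E).
Qed.

Variables (S : seq T) (le : rel T).
Hypothesis Hu : uniq S.
Hypothesis Hrefl : forall a, le a a.
Hypothesis Hanti : forall a b, le a b -> le b a -> a = b.
Hypothesis Htrans : forall a b c, le a b -> le b c -> le a c.

Definition hh x y := count (fun z => le x z && (z != y) && le z y) S.

Lemma hh_lt x y z : z \in S -> le x z && (z != y) && le z y -> (hh x z < hh x y)%N.
Proof.
move=> Hz Hp; have Hp0 := Hp; apply: count_lt Hz Hp0 _; last by rewrite eqxx andbF.
move=> a /andP[/andP[Hxa Haz] Hza]; case/andP: Hp => /andP[Hxz Hzy] Hzy'.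
rewrite Hxa (Htrans Hza Hzy') andbT /=; apply/eqP => E; subst a.
by move/negP: Hzy; apply; rewrite (Hanti Hzy' Hza).
Qed.

Lemma mob_fuel k1 k2 x y : (hh x y <= k1)%N -> (hh x y <= k2)%N ->
  mobius_f S le k1 x y = mobius_f S le k2 x y.
Proof.
have H0 : forall y k, hh x y = 0%N -> x != y -> mobius_f S le k x y = 0.
  move=> y' k H Hxy; rewrite mobius_fE (negbTE Hxy).
  case: k => // k; case: (le x y') => //; rewrite big_hasC ?oppr0 //.
  by rewrite has_count; rewrite /hh in H; rewrite H.
elim: k1 k2 y => [|k1 IH] k2 y.
  rewrite leqn0 => /eqP Hh _; case: (boolP (x == y)) => Hxy.
    by rewrite mobius_fE [RHS]mobius_fE Hxy.
  by rewrite !H0.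
case: k2 => [|k2].
  rewrite leqn0 => _ /eqP Hh; case: (boolP (x == y)) => Hxy.
    by rewrite mobius_fE [RHS]mobius_fE Hxy.
  by rewrite !H0.
move=> H1 H2; rewrite mobius_fE [RHS]mobius_fE; case: (x == y) => //; case: (le x y) => //.
congr (- _); rewrite big_seq_cond [RHS]big_seq_cond; apply: eq_bigr => z /andP[Hz Hp].
have := hh_lt Hz Hp => Hl.
by apply: IH; rewrite -ltnS; apply: leq_trans Hl _.
Qed.

Definition M x y := mobius_f S le (size S) x y.

Lemma hh_size x y : (hh x y <= size S)%N.
Proof. exact: count_size. Qed.

Lemma M_refl x : M x x = 1.
Proof. by rewrite /M mobius_fE eqxx. Qed.

Lemma M_zero x y : ~~ le x y -> M x y = 0.
Proof.
move=> H; rewrite /M mobius_fE; case: eqP => [E|_]; first by subst; rewrite Hrefl in H.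
by case: (size S) => //; rewrite (negbTE H).
Qed.

Lemma M_unfold x y : x != y -> le x y ->
  M x y = - \sum_(z <- S | le x z && (z != y) && le z y) M x z.
Proof.
move=> Hxy Hle; rewrite /M mobius_fE (negbTE Hxy).
case E: (size S) => [|k].
  by move/size0nil: E => ->; rewrite big_nil oppr0.
rewrite Hle; congr (- _); rewrite big_seq_cond [RHS]big_seq_cond.
apply: eq_bigr => z /andP[Hz Hp]; have Hl := hh_lt Hz Hp; have Hs := hh_size x y; rewrite E in Hs.
apply: mob_fuel; rewrite /hh in Hl Hs *; try rewrite E; lia.
Qed.

Lemma M_sum x y : x \in S -> y \in S ->
  \sum_(z <- S | le x z && le z y) M x z = if x == y then 1 else 0.
Proof.
move=> Hx Hy; case: eqP => [<-|Hne].
  rewrite (eq_bigl (fun z => z == x)); last first.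
    move=> z; apply/andP/eqP => [[H1 H2]|->]; [exact: Hanti | by rewrite Hrefl].
  by rewrite big_mkcond /= sum_delta // M_refl.
case Hle: (le x y); last first.
  rewrite big_pred0 // => z; apply/negP => /andP[H1 H2].
  by rewrite (Htrans H1 H2) in Hle.
rewrite big_mkcond (bigD1_seq y) //= Hle Hrefl /= (M_unfold (introN eqP Hne) Hle).
rewrite [X in _ + X = _]big_mkcond.
rewrite [X in _ + X = _](eq_bigr (fun z => if le x z && (z != y) && le z y then M x z else 0)).
  by rewrite -big_mkcond addNr.
by move=> z _; case: (z != y); rewrite ?andbT ?andbF.
Qed.
End Mob.

Lemma mob_dual (T : eqType) (S : seq T) (le : rel T) (Hu : uniq S)
  (Hrefl : forall a, le a a) (Hanti : forall a b, le a b -> le b a -> a = b)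
  (Htrans : forall a b c, le a b -> le b c -> le a c) x y :
  x \in S -> y \in S -> M S le x y = M S (fun a b => le b a) y x.
Proof.
move=> Hx Hy.
set Mo := M S (fun a b => le b a).
have Hantio : forall a b, le b a -> le a b -> a = b by move=> a b H1 H2; apply: Hanti.
have Htranso : forall a b c, le b a -> le c b -> le c a by move=> a b c H1 H2; apply: Htrans H2 H1.
have Lop : forall w z, w \in S -> z \in S ->
    \sum_(v <- S | le v w && le z v) Mo w v = if z == w then 1 else 0.
  move=> w z Hw Hz; rewrite eq_sym.
  exact: (M_sum (le := fun a b => le b a) Hu Hrefl Hantio Htranso Hw Hz).
rewrite -(sum_delta (fun z => M S le x z) Hu Hy).
rewrite (eq_big_seq (fun z => \sum_(w <- S) (if le w y && le z w then M S le x z * Mo y w else 0))); last first.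
  move=> z Hz; rewrite -big_mkcond /= -mulr_sumr Lop //.
  by case: (z == y); rewrite ?mulr1 ?mulr0.
rewrite exchange_big /=.
rewrite (eq_big_seq (fun w => if w == x then Mo y x else 0)); last first.
  move=> w Hw.
  rewrite (eq_bigr (fun z => if le w y then Mo y w * (if le x z && le z w then M S le x z else 0) else 0)); last first.
    move=> z _; case: (le w y) => //=; case Hxz: (le x z) => /=.
      by case: (le z w); rewrite ?mulr0 // mulrC.
    rewrite (M_zero S Hrefl (negbT Hxz)) mulr0.
    by case: (le z w); rewrite ?mulr0 ?mul0r.
  case Hwy: (le w y); last first.
    by rewrite (eq_bigr (fun=> 0)) // big1_eq; case: eqP => // Ewx; subst w; rewrite /Mo (M_zero S (le := fun a b => le b a) Hrefl) // Hwy.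
  rewrite /= -mulr_sumr -big_mkcond /= (M_sum Hu Hrefl Hanti Htrans Hx Hw).
  by rewrite eq_sym; case: eqP => [->|_]; rewrite ?mulr1 ?mulr0.
by rewrite sum_delta.
Qed.
End MobTheory.
Import MobTheory.

Lemma vle_refl s : vle s s.
Proof. by apply/vleP; split. Qed.
Lemma vle_trans a b c : vle a b -> vle b c -> vle a c.
Proof.
move=> /vleP[H1 H2] /vleP[H3 H4]; apply/vleP; split; first by rewrite H1.
move=> i Hi; apply: leq_trans (H2 i Hi) (H4 i _); lia.
Qed.
Lemma vle_anti a b : vle a b -> vle b a -> a = b.
Proof.
move=> /vleP[H1 H2] /vleP[H3 H4]; apply: (eq_from_nth (x0 := 0)) => // i Hi.
by apply/eqP; rewrite eqn_leq H2 // H4 // -H1.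
Qed.

Theorem mainTheorem16 (n : nat) (hn : 1 <= n) (t u : bt)
  (ht : isize t = n) (hu : isize u = n) :
  (vlt (name t) (name u) <-> vlt (name (mirror u)) (name (mirror t))) /\
  mobius (hatN n) vle (name t) (name u) =
  mobius (hatN n) vle (name (mirror u)) (name (mirror t)).
Proof.
split.
  by rewrite /vlt key !(inj_eq name_inj) !(inj_eq mirror_inj) [u == t]eq_sym.
rewrite /mobius /hatN !(mob_map name_inj) size_map.
have Hperm : perm_eq (trees n) (map mirror (trees n)).
  apply: uniq_perm; rewrite ?(map_inj_uniq mirror_inj) ?uniq_trees //.
  move=> a; rewrite -{2}(mirrorK a) (mem_map mirror_inj) !mem_trees isize_mirror //.
rewrite [RHS](mob_perm _ _ _ _ Hperm) (mob_map mirror_inj).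
rewrite [RHS](mob_ext _ _ (le2 := fun a b => vle (name b) (name a))); last by move=> a b; rewrite key.
apply: (mob_dual (le := fun a b => vle (name a) (name b))).
- exact: uniq_trees.
- by move=> a; apply: vle_refl.
- by move=> a b H1 H2; apply: name_inj; apply: vle_anti.
- by move=> a b c; apply: vle_trans.
- by rewrite mem_trees ht.
- by rewrite mem_trees hu.
Qed.
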